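(* Let $H = \{h_0 = 0_H, h_1, \dots, h_{t-1}\}$ be a finite abelian group with a fixed enumeration of its elements, and let $\boldsymbol{\lambda} = (\lambda_0,\dots,\lambda_{t-1})$ be a sequence of nonnegative integers. Suppose that for infinitely many primes $p$, every non-zero sum subset of type $\boldsymbol{\lambda}$ of $(\mathbb{Z}_p \times H) \setminus \{0_{\mathbb{Z}_p\times H}\}$ is sequenceable. Then for every torsion-free abelian group $G$, every non-zero sum subset of type $\boldsymbol{\lambda}$ of $(G \times H) \setminus \{0_{G\times H}\}$ is sequenceable.
   Context: For a finite subset $S$ of an abelian group with $|S| = k$, an ordering $(x_1,\dots,x_k)$ of $S$ has partial sums $(y_0,\dots,y_k)$ with $y_0 = 0$, $y_i = x_1+\cdots+x_i$. It is a sequencing if the $y_i$ are pairwise distinct, and a rotational sequencing if they are pairwise distinct except that $y_k = y_0 = 0$; $S$ is sequenceable if it has one or the other. $S$ is non-zero sum if the sum of its elements is nonzero. For an abelian group $G$ and a finite abelian group $H = \{h_0=0_H,\dots,h_{t-1}\}$, the type of a finite subset $S \subseteq G \times H$ is $(\lambda_0,\dots,\lambda_{t-1})$ where $\lambda_i$ is the number of elements of $S$ whose $H$-coordinate equals $h_i$. *)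

(* Defs.v *)
From HB Require Import structures.
From mathcomp Require Import all_boot all_order all_algebra.
Set Implicit Arguments. Unset Strict Implicit. Unset Printing Implicit Defensive.
Import GRing.Theory.
Local Open Scope ring_scope.

Definition partial_sums (A : zmodType) (s : seq A) : seq A :=
  [seq \sum_(x <- take i s) x | i <- iota 0 (size s).+1].

Definition is_sequencing (A : zmodType) (s : seq A) : bool :=
  uniq (partial_sums s).

Definition is_rotational_sequencing (A : zmodType) (s : seq A) : bool :=
  uniq (take (size s) (partial_sums s)) && (\sum_(x <- s) x == 0).

(* A finite subset S (given as a duplicate-free list) is sequenceable if
   some ordering of S is a sequencing or a rotational sequencing. *)
Definition sequenceable (A : zmodType) (S : seq A) : Prop :=
  exists s : seq A, perm_eq s S /\ (is_sequencing s || is_rotational_sequencing s).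

Definition nonzero_sum (A : zmodType) (S : seq A) : bool := \sum_(x <- S) x != 0.

Definition has_type (G : zmodType) (H : finZmodType) (t : nat)
  (h : 'I_t -> H) (lam : 'I_t -> nat) (S : seq (G * H)) : Prop :=
  forall i : 'I_t, count (fun x => x.2 == h i) S = lam i.

Definition torsion_free (G : zmodType) : Prop :=
  forall (x : G) (n : nat), (0 < n)%N -> x *+ n = 0 -> x = 0.

(* Main.v *)
Require Import Defs.
From HB Require Import structures.
From mathcomp Require Import all_boot all_order all_algebra.
From mathcomp Require Import ring zify.
From Stdlib Require Import Classical.
Set Implicit Arguments. Unset Strict Implicit.
Import Order.TTheory GRing.Theory Num.Theory.
Local Open Scope ring_scope.

Definition tfree (G : zmodType) : Prop :=
  forall (x : G) (n : nat), (0 < n)%N -> x *+ n = 0 -> x = 0.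

Definition dotG (G : zmodType) (g : seq G) (c : nat -> int) : G :=
  \sum_(i < size g) g`_i *~ c i.
Definition dotZ (m : nat) (a c : nat -> int) : int := \sum_(i < m) a i * c i.

Lemma dotG_cons (G : zmodType) (x : G) g c :
  dotG (x :: g) c = x *~ c 0%N + dotG g (fun i => c i.+1).
Proof. by rewrite /dotG /= big_ord_recl. Qed.

Lemma dotZ_S m a c :
  dotZ m.+1 a c = a 0%N * c 0%N + dotZ m (fun i => a i.+1) (fun i => c i.+1).
Proof. by rewrite /dotZ big_ord_recl. Qed.

Lemma dotG_lin (G : zmodType) (g : seq G) (c d : nat -> int) (u v : int) :
  dotG g (fun i => u * c i + v * d i) = dotG g c *~ u + dotG g d *~ v.
Proof.
rewrite /dotG !mulrz_suml -big_split /=; apply: eq_bigr => i _.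
by rewrite mulrzDr; congr (_ + _); rewrite mulrzA_C.
Qed.

Lemma dotZ_bound m a c (B : int) : 0 <= B -> (forall i, (i < m)%N -> `|c i| <= B) ->
  `|dotZ m a c| <= B * \sum_(i < m) `|a i|.
Proof.
move=> B0 hc; rewrite /dotZ mulr_sumr; apply: le_trans (ler_norm_sum _ _ _) _.
apply: ler_sum => i _; rewrite normrM mulrC; apply: ler_wpM2r => //.
exact: hc.
Qed.

Lemma le_sum_term m (f : nat -> int) i : (i < m)%N -> `|f i| <= \sum_(j < m) `|f j|.
Proof.
move=> hi; rewrite (bigD1 (Ordinal hi)) //= lerDl; apply: sumr_ge0 => j _; exact: normr_ge0.
Qed.

Lemma dotG_neg (G : zmodType) (g : seq G) c : dotG g (fun i => - c i) = - dotG g c.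
Proof. by rewrite /dotG -sumrN; apply: eq_bigr => i _; rewrite mulrNz. Qed.

Lemma key (G : zmodType) (tf : tfree G) (g : seq G) :
  forall B : int, exists a : nat -> int, forall c : nat -> int,
  (forall i, (i < size g)%N -> `|c i| <= B) ->
  (dotG g c == 0) = (dotZ (size g) a c == 0).
Proof.
elim: g => [|x g IH] B.
  by exists (fun _ => 0) => c _; rewrite /dotG /dotZ !big_ord0 !eqxx.
have [[n [b [n0 hx]]]|hind] :=
  classic (exists n b, (0 < n)%N /\ x *+ n = dotG g b).
- pose Bb := \sum_(i < size g) `|b i|.
  have [a' ha'] := IH (B * (Bb + n%:R)).
  exists (fun i => if i is j.+1 then n%:R * a' j else dotZ (size g) a' b) => c hc.
  have B0 : 0 <= B by apply: le_trans (hc 0%N isT); exact: normr_ge0.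
  pose c' := fun i => c 0%N * b i + n%:R * c i.+1.
  have e1 : dotG (x :: g) c *+ n = dotG g c'.
    rewrite dotG_cons /c' dotG_lin -mulrz_nat mulrzDl mulrzAC mulrz_nat hx.
    done.
  have e2 : dotZ (size g).+1 (fun i => if i is j.+1 then n%:R * a' j else dotZ (size g) a' b) c
      = dotZ (size g) a' c'.
    rewrite dotZ_S /= /dotZ /c' mulr_suml -big_split; apply: eq_bigr => i _ /=; ring.
  have -> : (dotG (x::g) c == 0) = (dotG (x::g) c *+ n == 0).
    apply/idP/idP => [/eqP->|/eqP h]; first by rewrite mul0rn.
    by apply/eqP; apply: tf h.
  rewrite e1 /= e2 ha' // => i hi.
  apply: le_trans (ler_normD _ _) _.
  rewrite !normrM normr_nat mulrDr; apply: lerD.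
    apply: ler_pM; [exact: normr_ge0|exact: normr_ge0|exact: hc|exact: le_sum_term].
  by rewrite mulrC; apply: ler_wpM2r => //; apply: hc.
- have [a' ha'] := IH B.
  pose K := B * \sum_(i < size g) `|a' i|.
  exists (fun i => if i is j.+1 then a' j else K + 1) => c hc.
  have B0 : 0 <= B by apply: le_trans (hc 0%N isT); exact: normr_ge0.
  have hc' : forall i, (i < size g)%N -> `|c i.+1| <= B by move=> i hi; apply: hc.
  rewrite dotG_cons dotZ_S /=.
  have [c00|c0n] := eqVneq (c 0%N) 0.
    by rewrite c00 mulr0z add0r mulr0 add0r; apply: ha'.
  have -> : (x *~ c 0%N + dotG g (fun i => c i.+1) == 0) = false.
    apply/negbTE/eqP => h; apply: hind.
    move: h c0n; case: (c 0%N) => [m|m] h c0n.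
      exists m, (fun i => - c i.+1); split; first by move: c0n; clear; lia.
      by rewrite dotG_neg; apply/eqP; rewrite -addr_eq0 pmulrn; apply/eqP.
    exists m.+1, (fun i => c i.+1); split => //.
    by move/eqP: h; rewrite NegzE mulrNz -pmulrn addrC subr_eq0 => /eqP.
  apply/esym/negbTE/eqP => h.
  have hb := dotZ_bound a' B0 hc'.
  have K0 : 0 <= K by apply: mulr_ge0 => //; apply: sumr_ge0 => i _; exact: normr_ge0.
  move: hb h c0n K0; rewrite -/K.
  set d := dotZ _ _ _; set c0 := c 0%N => hb h c0n K0.
  have e : (K + 1) * c0 = - d by apply/eqP; rewrite -addr_eq0; apply/eqP; exact: h.
  have : `|(K + 1) * c0| <= K by rewrite e normrN; exact: hb.
  rewrite normrM (ger0_norm (_ : 0 <= K + 1)); last by apply: addr_ge0.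
  have : 0 < `|c0| by rewrite normr_gt0.
  move: K0; set y := `|c0|; clear; nia.
Qed.

Lemma sum_count (M : zmodType) (F : nat -> M) k L : all (fun i => (i < k)%N) L ->
  \sum_(i <- L) F i = \sum_(i < k) F i *~ (count_mem (i : nat) L)%:Z.
Proof.
elim: L => [_|x L IH /andP[xk aL]].
  by rewrite big_nil big1 // => i _; rewrite /= mulr0z.
rewrite big_cons IH //=.
under [RHS]eq_bigr do rewrite PoszD mulrzDr.
rewrite big_split /=; congr (_ + _).
rewrite (bigD1 (Ordinal xk)) //= eqxx big1 ?addr0 ?mulr1z // => i hi.
have ne : x != i by apply: contra hi => /eqP e; apply/eqP/val_inj.
by rewrite (negbTE ne) mulr0z.
Qed.

Lemma sum_pair (A B : zmodType) (I : Type) (L : seq I) (F : I -> (A * B)%type) :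
  \sum_(i <- L) F i = (\sum_(i <- L) (F i).1, \sum_(i <- L) (F i).2).
Proof. by elim: L => [|x L IH]; rewrite ?big_nil ?big_cons // IH. Qed.

Lemma uniq_transfer (T1 T2 : eqType) (F : nat -> T1) (F' : nat -> T2) l :
  uniq (map F' l) -> (forall u v, u \in l -> v \in l -> F u = F v -> F' u = F' v) ->
  uniq (map F l).
Proof.
elim: l => //= x l IH /andP[nx ul] H; apply/andP; split; last first.
  by apply: IH => // u v hu hv; apply: H; rewrite inE ?hu ?hv orbT.
apply/mapP => -[y yl e]; apply: (negP nx); apply/mapP; exists y => //.
by apply: H; rewrite ?inE ?eqxx ?yl ?orbT.
Qed.

Lemma modp_int (p : nat) (z : int) : (1 < p)%N -> (`|z|%N < p)%N ->
  (z%:~R : 'Z_p) = 0 -> z = 0.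
Proof.
move=> p1; case: z => n /= hn.
  move/(congr1 val); rewrite /= val_Zp_nat // modn_small //= => ->; done.
rewrite NegzE mulrNz => /eqP; rewrite oppr_eq0 => /eqP.
move/(congr1 val); rewrite /= val_Zp_nat // modn_small //.
Qed.

Unset Implicit Arguments.
Theorem theorem4p4 (H : finZmodType) (t : nat) (h : 'I_t -> H)
  (h_bij : bijective h) (h_0 : forall i : 'I_t, nat_of_ord i = 0%N -> h i = 0)
  (lam : 'I_t -> nat) :
  (forall N : nat, exists p : nat, (N < p)%N /\ prime p /\
     (forall S : seq ('Z_p * H)%type, uniq S -> 0 \notin S ->
        has_type h lam S -> nonzero_sum S -> sequenceable S)) ->
  forall G : zmodType, torsion_free G ->
  forall S : seq (G * H)%type, uniq S -> 0 \notin S ->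
    has_type h lam S -> nonzero_sum S -> sequenceable S.

Proof.
move=> hyp G tfG S uS nz0 ht nzs.
have tf' : tfree G by exact: tfG.
pose k := size S.
pose g := map fst S.
have [a ha] := key tf' g 1.
have sg : size g = k by rewrite size_map.
pose P := \sum_(i < k) `|a i|.
have [p [hNp [pp hp]]] := hyp `|P|%N.
have p1 : (1 < p)%N by apply: prime_gt1.
pose phi := fun i => (((a i)%:~R : 'Z_p), (S`_i).2).
have EQ : forall L1 L2 : seq nat, uniq L1 -> uniq L2 ->
    all (fun i => (i < k)%N) L1 -> all (fun i => (i < k)%N) L2 ->
    (\sum_(i <- L1) (S`_i).1 == \sum_(i <- L2) (S`_i).1) =
    (\sum_(i <- L1) ((a i)%:~R : 'Z_p) == \sum_(i <- L2) (a i)%:~R).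
  move=> L1 L2 u1 u2 h1 h2.
  pose c := fun m => (count_mem m L1)%:Z - (count_mem m L2)%:Z.
  have cb : forall m, (m < size g)%N -> `|c m| <= 1.
    move=> m _; rewrite /c !count_uniq_mem //.
    by case: (m \in L1); case: (m \in L2).
  have hG : dotG g c = \sum_(i <- L1) (S`_i).1 - \sum_(i <- L2) (S`_i).1.
    rewrite /dotG sg (sum_count _ h1) (sum_count _ h2) -sumrB.
    by apply: eq_bigr => i _; rewrite (nth_map 0) ?ltn_ord // mulrzBr.
  have hZ : ((dotZ k a c)%:~R : 'Z_p) =
      \sum_(i <- L1) ((a i)%:~R : 'Z_p) - \sum_(i <- L2) (a i)%:~R.
    rewrite /dotZ (sum_count _ h1) (sum_count _ h2) -sumrB mulrz_sumr.
    by apply: eq_bigr => i _; rewrite intrM mulrzr mulrzBr.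
  have hb := dotZ_bound a (@ler01 _) cb.
  rewrite -[in LHS]subr_eq0 -hG ha sg.
  rewrite -[in RHS]subr_eq0 -hZ.
  apply/idP/idP => [/eqP->//|/eqP hh]; apply/eqP; apply: (modp_int p1) hh.
  move: hb hNp; rewrite sg mul1r -/P; lia.
  by move=> m hm; apply: cb; rewrite sg.
have allk : all (fun i => (i < k)%N) (iota 0 k).
  by apply/allP => i; rewrite mem_iota.
have S_eq : S = map (nth 0 S) (iota 0 k).
  by rewrite -[in LHS](mkseq_nth 0 S).
have all1 : forall i, (i < k)%N -> all (fun i => (i < k)%N) [:: i].
  by move=> i hi /=; rewrite hi.
pose S' := map phi (iota 0 k).
have uS' : uniq S'.
  rewrite map_inj_in_uniq ?iota_uniq // => i j; rewrite !mem_iota /= !add0n.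
  move=> hi hj [e1 e2].
  have := EQ [:: i] [:: j] isT isT (all1 _ hi) (all1 _ hj).
  rewrite !big_seq1 e1 eqxx => /eqP e3.
  apply/eqP; rewrite -(nth_uniq 0 hi hj uS); apply/eqP.
  by move: e2 e3; case: (S`_i); case: (S`_j) => /= ? ? ? ? -> ->.
have n0' : 0 \notin S'.
  apply/mapP => -[i]; rewrite mem_iota /= add0n => hi [e1 e2].
  have := EQ [:: i] [::] isT isT (all1 _ hi) isT.
  rewrite !big_seq1 !big_nil => E.
  have /eqP e3 : (S`_i).1 == 0 by rewrite E -e1; apply/eqP.
  move: nz0; rewrite -[0]/((0, 0) : (G * H)%type) => /negP; apply.
  have -> : ((0, 0) : (G * H)%type) = S`_i by move: e2 e3; case: (S`_i) => /= ? ? -> ->.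
  exact: mem_nth.
have ht' : has_type h lam S'.
  move=> i; rewrite -(ht i) [in RHS]S_eq /S' !count_map; exact: eq_count.
have nzs' : nonzero_sum S'.
  apply/negP => /eqP; rewrite big_map sum_pair => -[e1 e2].
  have := EQ (iota 0 k) [::] (iota_uniq _ _) isT allk isT.
  rewrite !big_nil => E.
  have /eqP e3 : \sum_(i <- iota 0 k) (S`_i).1 == 0 by rewrite E e1.
  move/negP: nzs; apply; apply/eqP.
  by rewrite {1}S_eq big_map sum_pair e3 e2.
have [s' [hperm hseq]] := hp S' uS' n0' ht' nzs'.
have hseq' : is_sequencing s'.
  case/orP: hseq => // /andP [_ hz]; exfalso.
  by move/negP: nzs'; apply; rewrite /nonzero_sum -(perm_big _ hperm).
have sS' : size S' = k by rewrite size_map size_iota.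
have [Is hIs es'] := perm_iotaP 0 hperm.
rewrite sS' in hIs.
have IsIn : forall i, i \in Is -> (i < k)%N.
  by move=> i; rewrite (perm_mem hIs) mem_iota.
have uIs : uniq Is by rewrite (perm_uniq hIs) iota_uniq.
have es'' : s' = map phi Is.
  rewrite es'; apply/eq_in_map => i hi.
  by rewrite (nth_map 0) ?size_iota ?nth_iota ?IsIn.
exists (map (nth 0 S) Is); split.
  by rewrite {2}S_eq; apply: perm_map.
move: hseq'; rewrite /is_sequencing /partial_sums es'' !size_map => U.
apply/orP; left; apply: (uniq_transfer U) => u v _ _ /=.
rewrite -!map_take !big_map !sum_pair => -[e1 e2].
rewrite e2; congr (_, _); apply/eqP; rewrite -EQ ?e1 ?take_uniq //.
  by apply/allP => i /mem_take /IsIn.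
by apply/allP => i /mem_take /IsIn.
Qed.
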